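(* The Que Sera Consensus (QSC) protocol, as described in the context, implements multi-consensus on $n$ nodes atop a full-spread threshold synchronous broadcast primitive $\mathrm{TSB}(t_r,t_b,n)$ with $t_r>0$ and $t_b>0$; that is, it satisfies the Liveness, Validity and Consistency properties defined in the context.
   Context: Threshold synchronous broadcast (TSB). A group of $n$ nodes, numbered $1,\dots,n$, operates in integer logical time-steps $0,1,2,\dots$. Nodes may fail only by crashing permanently. In each time-step every non-failed node calls $\mathrm{Broadcast}(m)$ exactly once; the call returns a pair $(R,B)$ of message sets. A primitive provides $\mathrm{TSB}(t_r,t_b,t_s)$ if: (lock-step synchrony) a call to $\mathrm{Broadcast}(m)$ at step $s$ returns at step $s+1$ unless the node fails before reaching step $s+1$; (receive threshold) if node $i$'s call at step $s$ returns $(R,B)$, there is $N_R\subseteq\{1,\dots,n\}$ with $|N_R|\ge t_r$ such that $R$ is exactly the set of messages broadcast by the nodes in $N_R$ during step $s$; (broadcast threshold) there is $N_B\subseteq\{1,\dots,n\}$ with $|N_B|\ge t_b$ such that $B$ is exactly the set of messages broadcast by the nodes in $N_B$ during step $s$; (spread threshold) if some node's call at step $s$ returns $(R,B)$ with $m'\in B$, then there are at least $t_s$ nodes whose receive sets $R$ returned from their step-$s$ calls include $m'$ (a node that fails before completing step $s$ counts if it would have received $m'$ had it not failed). The case $t_s=n$ is called full-spread. Standing assumption: the network's choice of the sets $N_R,N_B$ is independent of the random priority values contained in messages (e.g. private channels). Histories and priorities. A proposal is a triple $\langle i,m,r\rangle$ (node, message, numeric priority). A history is a finite list of proposals; $[]$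 is the empty history and $\|$ is concatenation. The priority of a nonempty history is the priority of its last proposal. A history $h$ is best in a set $H$ if $h\in H$ and no $h'\in H$ has strictly greater priority; $h$ is uniquely best in $H$ if $h\in H$ and no other $h'\ne h$ in $H$ has priority $\ge$ that of $h$. QSC protocol. Parameterized by ChooseMessage (returns some message, possibly empty; the application upcalls do not interfere with the protocol), Deliver (passes a history to the application), RandomValue (returns a value drawn using node-private randomness from a fixed nontrivial distribution, the same on every node, having at least two values of nonzero probability), and Broadcast (the TSB primitive). Each node $i$ runs: $h\leftarrow[]$; forever repeat: $m\leftarrow\mathrm{ChooseMessage}()$; $r\leftarrow\mathrm{RandomValue}()$; $h'\leftarrow h\,\|\,[\langle i,m,r\rangle]$; $(R',B')\leftarrow\mathrm{Broadcast}(h')$; $h''\leftarrow$ any best history in $B'$; $(R'',B'')\leftarrow\mathrm{Broadcast}(h'')$; $h\leftarrow$ any best history in $R''$; if $h\in B''$ and $h$ is uniquely best in $R'$, call $\mathrm{Deliver}(h)$. Multi-consensus. A protocol $\mathcal P$ with these function parameters is a multi-consensus protocol if: (Liveness) if $h$ is the longest history $\mathcal P$ has delivered by time-step $s$ on a non-failing node $i$ (or $h=[]$ if none), then (with probability 1) there is a future step $s'>s$ at which $\mathcal P$ on $i$ invokes $\mathrm{Deliver}(h')$ with $|h'|>|h|$; (Validity) for some constant $\delta\ge0$, if $\mathcal P$ invokes $\mathrm{Deliver}(h'\,\|\,[p])$ at step $s'$ on node $j$, then $p$ is a proposal $\langle i,m,r\rangle$ where node $i$ obtained $m$ from an invocation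 of ChooseMessage at some step $s\le s'$ with $s'-s\le\delta$; (Consistency) if $\mathcal P$ invokes $\mathrm{Deliver}(h)$ at step $s$ on node $i$ and later $\mathrm{Deliver}(h')$ at step $s'\ge s$ on node $j$ (same or different), then $h$ is a prefix of $h'$. *)

(* Defs.v *)
From HB Require Import structures.
From mathcomp Require Import all_boot all_order all_algebra.
From mathcomp Require Import all_classical all_reals all_analysis.

Set Implicit Arguments.
Unset Strict Implicit.
Unset Printing Implicit Defensive.

Import Order.TTheory GRing.Theory Num.Theory.
Local Open Scope ring_scope.
Local Open Scope classical_set_scope.

Section Histories.
Variables (R : realType) (M : eqType) (n : nat).

(* a proposal <i, m, r> *)
Definition proposal := ('I_n * M * R)%type.
Definition history := seq proposal.

(* priority of a nonempty history = priority of its last proposal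
   (the value on [::] is irrelevant: it is never used) *)
Definition hprio (h : history) : R :=
  if h is p :: t then (last p t).2 else 0.

Definition is_best (h : history) (H : seq history) : Prop :=
  h \in H /\ forall h', h' \in H -> ~ (hprio h < hprio h').

Definition uniquely_best (h : history) (H : seq history) : Prop :=
  h \in H /\ forall h', h' \in H -> h' != h -> ~ (hprio h <= hprio h').

End Histories.

(* The (deterministic) QSC execution, given the network schedule, the *)
(* application choices, the tie-breaking among best histories, and    *)
(* the realized random priorities rr i k (node i, QSC round k).       *)
(* QSC round k uses broadcast time-steps 2k and 2k+1; the delivery    *)
(* decision of round k happens when the second call returns, i.e. at  *)
(* time-step 2k+2.                                                    *)
Section Execution.
Variables (R : realType) (M : eqType) (n : nat).
Variable alive : 'I_n -> nat -> bool.          (* alive i s : node i reaches step s *)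
Variables NR NB : nat -> 'I_n -> {set 'I_n}.
Variable choose : 'I_n -> nat -> history R M n -> M.
Variable pick : nat -> 'I_n -> seq (history R M n) -> history R M n.
  (* "any best history": the choice made by node i at step s *)
Variable rr : 'I_n -> nat -> R.                (* RandomValue of node i in round k *)

Local Notation hist := (history R M n).

Definition hp (st : 'I_n -> hist) (k : nat) (j : 'I_n) : hist :=
  rcons (st j) (j, choose j k (st j), rr j k).
Definition Bp st k (i : 'I_n) : seq hist := [seq hp st k j | j <- enum (NB k.*2 i)].
Definition Rp st k (i : 'I_n) : seq hist := [seq hp st k j | j <- enum (NR k.*2 i)].
Definition hpp st k (j : 'I_n) : hist := pick k.*2 j (Bp st k j).
Definition Bpp st k (i : 'I_n) : seq hist := [seq hpp st k j | j <- enum (NB k.*2.+1 i)].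
Definition Rpp st k (i : 'I_n) : seq hist := [seq hpp st k j | j <- enum (NR k.*2.+1 i)].
Definition next_state st k (i : 'I_n) : hist := pick k.*2.+1 i (Rpp st k i).

(* state k i = the value of h on node i at the start of round k *)
Fixpoint state (k : nat) : 'I_n -> hist :=
  match k with
  | 0 => fun _ => [::]
  | k'.+1 => next_state (state k') k'
  end.

Definition msg (s : nat) (j : 'I_n) : hist :=
  if odd s then hpp (state s./2) s./2 j else hp (state s./2) s./2 j.

(* node i invokes Deliver(state k.+1 i) at time-step 2k+2 *)
Definition delivers (k : nat) (i : 'I_n) : Prop :=
  alive i k.*2.+2 /\
  state k.+1 i \in Bpp (state k) k i /\
  uniquely_best (state k.+1 i) (Rp (state k) k i).

Definition delivered_by (s : nat) (i : 'I_n) (h : hist) : Prop :=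
  exists k, (k.*2.+2 <= s)%N /\ delivers k i /\ h = state k.+1 i.

Definition longest_delivered (s : nat) (i : 'I_n) (h : hist) : Prop :=
  (delivered_by s i h /\ forall h', delivered_by s i h' -> (size h' <= size h)%N)
  \/ (h = [::] /\ forall h', ~ delivered_by s i h').

Definition tsb_full (t_r t_b : nat) : Prop :=
  forall (s : nat) (i : 'I_n), alive i s.+1 ->
  [/\ t_r <= #|NR s i|, t_b <= #|NB s i|,
      NR s i \subset [set j | alive j s],
      NB s i \subset [set j | alive j s] &
      forall j, j \in NB s i -> forall k : 'I_n,
        exists2 j', j' \in NR s k & msg s j' = msg s j]%N.

Definition consistency_run : Prop :=
  forall (k k' : nat) (i j : 'I_n), (k <= k')%N ->
    delivers k i -> delivers k' j -> prefix (state k.+1 i) (state k'.+1 j).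

Definition validity_run (delta : nat) : Prop :=
  forall (k : nat) (i : 'I_n) (h0 : hist) (p : proposal R M n),
    delivers k i -> state k.+1 i = rcons h0 p ->
    exists k0 : nat,
      [/\ p.1.2 = choose p.1.1 k0 (state k0 p.1.1),
          alive p.1.1 k0.*2,
          k0.*2 <= k.*2.+2 &
          k.*2.+2 - k0.*2 <= delta]%N.

End Execution.

Section Indep.
Local Open Scope ereal_scope.
Variables (d : measure_display) (T : measurableType d) (R : realType).
Variable (P : probability T R).

Definition mutually_independent (I : eqType) (X : I -> T -> R) : Prop :=
  forall (F : seq I) (B : I -> set R), uniq F ->
    (forall i, measurable (B i)) ->
    P (\bigcap_(i in [set` F]) (X i @^-1` B i)) =
    \big[*%E/1%E]_(i <- F) P (X i @^-1` B i).

Definition identically_distributed (I : Type) (X : I -> T -> R) : Prop :=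
  forall i j (B : set R), measurable B -> P (X i @^-1` B) = P (X j @^-1` B).
End Indep.

(* Main.v *)
Require Import Defs.
From HB Require Import structures.
From mathcomp Require Import all_boot all_order all_algebra.
From mathcomp Require Import all_classical all_reals all_analysis.
From mathcomp Require Import zify ring.
Import Order.TTheory GRing.Theory Num.Theory.
Local Open Scope ring_scope.
Local Open Scope classical_set_scope.

Set Implicit Arguments.
Unset Strict Implicit.

Section Det.
Variables (R : realType) (M : eqType) (n t_r t_b : nat).
Variable alive : 'I_n -> nat -> bool.
Variables NR NB : nat -> 'I_n -> {set 'I_n}.
Variable choose : 'I_n -> nat -> history R M n -> M.
Variable pick : nat -> 'I_n -> seq (history R M n) -> history R M n.
Variable rr : 'I_n -> nat -> R.
Hypothesis Htr : (0 < t_r)%N.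
Hypothesis Htb : (0 < t_b)%N.
Hypothesis Hmono : forall i s, alive i s.+1 -> alive i s.
Hypothesis Hpick : forall s i (H : seq (history R M n)), H != [::] -> is_best (pick s i H) H.
Hypothesis Htsb : tsb_full alive NR NB choose pick rr t_r t_b.

Local Notation st := (state NR NB choose pick rr).
Local Notation hp := (hp choose rr).
Local Notation hpp := (hpp NB choose pick rr).

Lemma NB_alive s i j : alive i s.+1 -> j \in NB s i -> alive j s.
Proof.
move=> Ha Hj; have [_ _ _ /fintype.subsetP H _] := Htsb Ha.
by have := H _ Hj; rewrite inE.
Qed.

Lemma NR_alive s i j : alive i s.+1 -> j \in NR s i -> alive j s.
Proof.
move=> Ha Hj; have [_ _ /fintype.subsetP H _ _] := Htsb Ha.
by have := H _ Hj; rewrite inE.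
Qed.

Lemma NB_ne s i : alive i s.+1 -> exists j, j \in NB s i.
Proof.
move=> Ha; have [_ H _ _ _] := Htsb Ha.
have : (0 < #|NB s i|)%N by apply: leq_trans H.
by rewrite card_gt0 => /set0Pn.
Qed.

Lemma NR_ne s i : alive i s.+1 -> exists j, j \in NR s i.
Proof.
move=> Ha; have [H _ _ _ _] := Htsb Ha.
have : (0 < #|NR s i|)%N by apply: leq_trans H.
by rewrite card_gt0 => /set0Pn.
Qed.

Lemma mem_ne (T : eqType) (x : T) (s : seq T) : x \in s -> s != [::].
Proof. by case: s. Qed.

Lemma pick_mem s i (H : seq (history R M n)) : H != [::] -> pick s i H \in H.
Proof. by move=> /(Hpick s i) []. Qed.

Lemma msg_even k j : msg NR NB choose pick rr k.*2 j = hp (st k) k j.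
Proof. by rewrite /msg odd_double doubleK. Qed.

Lemma msg_odd k j : msg NR NB choose pick rr k.*2.+1 j = hpp (st k) k j.
Proof.
rewrite /msg /= odd_double /=.
by rewrite uphalf_double.
Qed.

Lemma spread0 k j z m : alive j k.*2.+1 -> z \in NB k.*2 j ->
  hp (st k) k z \in Rp NR choose rr (st k) k m.
Proof.
move=> Ha Hz; have [_ _ _ _ H] := Htsb Ha.
have [j' Hj' E] := H _ Hz m.
rewrite !msg_even in E; rewrite -E.
by apply/mapP; exists j'; rewrite ?mem_enum.
Qed.

Lemma spread1 k j z m : alive j k.*2.+2 -> z \in NB k.*2.+1 j ->
  hpp (st k) k z \in Rpp NR NB choose pick rr (st k) k m.
Proof.
move=> Ha Hz; have [_ _ _ _ H] := Htsb Ha.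
have [j' Hj' E] := H _ Hz m.
rewrite !msg_odd in E; rewrite -E.
by apply/mapP; exists j'; rewrite ?mem_enum.
Qed.

Lemma hpp_in k j : alive j k.*2.+1 -> hpp (st k) k j \in Bp NB choose rr (st k) k j.
Proof.
move=> Ha; apply: pick_mem; have [z Hz] := NB_ne Ha.
by apply: (@mem_ne _ (hp (st k) k z)); apply/mapP; exists z; rewrite ?mem_enum.
Qed.

Lemma hpp_form k j : alive j k.*2.+1 ->
  exists2 z, z \in NB k.*2 j & hpp (st k) k j = hp (st k) k z.
Proof.
move=> /hpp_in /mapP [z Hz E]; exists z => //; by rewrite mem_enum in Hz.
Qed.

Lemma next_in k m : alive m k.*2.+2 -> st k.+1 m \in Rpp NR NB choose pick rr (st k) k m.
Proof.
move=> Ha; apply: pick_mem; have [z Hz] := NR_ne Ha.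
by apply: (@mem_ne _ (hpp (st k) k z)); apply/mapP; exists z; rewrite ?mem_enum.
Qed.

Lemma next_form k m : alive m k.*2.+2 ->
  exists2 j, j \in NR k.*2.+1 m & st k.+1 m = hpp (st k) k j.
Proof.
move=> /next_in /mapP [z Hz E]; exists z => //; by rewrite mem_enum in Hz.
Qed.

Lemma deliv_all k i m : delivers alive NR NB choose pick rr k i -> alive m k.*2.+2 ->
  st k.+1 m = st k.+1 i.
Proof.
move=> [Ha [Hb Hu]] Hm.
have /mapP [j0 Hj0 Eh] := Hb; rewrite mem_enum in Hj0.
have Hin : st k.+1 i \in Rpp NR NB choose pick rr (st k) k m.
  by rewrite Eh; apply: spread1 Ha Hj0.
have [_ Hbest] := Hpick k.*2.+1 m (mem_ne Hin).
apply/eqP; apply/negPn/negP => Hne.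
have [x Hx Ex] := next_form Hm.
have Hxa := NR_alive Hm Hx.
have [z Hz Ez] := hpp_form Hxa.
have Hy : st k.+1 m \in Rp NR choose rr (st k) k i.
  by rewrite Ex Ez; apply: spread0 Hxa Hz.
have [_ Hu2] := Hu; have := Hu2 _ Hy Hne.
have := Hbest _ Hin; rewrite /= -/(next_state _ _ _ _ _ _ _).
change (pick k.*2.+1 m (Rpp NR NB choose pick rr (st k) k m)) with (st k.+1 m).
by case: ltgtP.
Qed.

Lemma inv k i : delivers alive NR NB choose pick rr k i ->
  forall d m, alive m (k + d).+1.*2 -> prefix (st k.+1 i) (st (k + d).+1 m).
Proof.
move=> Hd; elim=> [|d IH] m.
  by rewrite addn0 doubleS => Hm; rewrite (deliv_all Hd Hm) prefix_refl.
rewrite addnS doubleS => Hm.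
have [j Hj E] := next_form Hm; rewrite E.
have Hja := NR_alive Hm Hj.
have [z Hz ->] := hpp_form Hja.
have Hza := NB_alive Hja Hz.
apply: prefix_trans (IH z Hza) _; exact: prefix_rcons.
Qed.

Lemma consistency_det : consistency_run alive NR NB choose pick rr.
Proof.
move=> k k' i j Hkk Hi Hj.
have [Ha _] := Hj.
rewrite -(subnKC Hkk); apply: (inv Hi).
by rewrite (subnKC Hkk) doubleS.
Qed.

Lemma validity_det : validity_run alive NR NB choose pick rr 2.
Proof.
move=> k i h0 p Hd E.
have [Ha [Hb _]] := Hd.
have /mapP [j0 Hj0 Eh] := Hb; rewrite mem_enum in Hj0.
have Hj0a := NB_alive Ha Hj0.
have [z Hz Ez] := hpp_form Hj0a.
have Hza := NB_alive Hj0a Hz.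
rewrite Eh Ez /hp in E.
case: (rcons_inj E) => _ <-.
exists k; split => //=; lia.
Qed.

Lemma hprio_rcons (s : history R M n) x : hprio (rcons s x) = x.2.
Proof. by case: s => [|a s] //=; rewrite last_rcons. Qed.

Lemma size_state k m : alive m k.*2 -> size (st k m) = k.
Proof.
elim: k m => [|k IH] m //.
rewrite doubleS => Hm.
have [j Hj E] := next_form Hm; rewrite E.
have Hja := NR_alive Hm Hj.
have [z Hz ->] := hpp_form Hja.
by rewrite /Defs.hp size_rcons IH // (NB_alive Hja Hz).
Qed.

Lemma success k i j1 j0 (hi lo : R) : lo < hi -> alive i k.*2.+2 ->
  j1 \in NB k.*2.+1 i -> j0 \in NB k.*2 j1 -> rr j0 k = hi ->
  (forall x, x != j0 -> rr x k = lo) ->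
  delivers alive NR NB choose pick rr k i.
Proof.
move=> Hlh Ha Hj1 Hj0 Ehi Elo.
have Hj1a := NB_alive Ha Hj1.
have Pr x : hprio (hp (st k) k x) = rr x k by rewrite hprio_rcons.
have Hlt x : x != j0 -> hprio (hp (st k) k x) < hprio (hp (st k) k j0).
  by move=> Hx; rewrite !Pr Ehi Elo.
have Hpp1 : hpp (st k) k j1 = hp (st k) k j0.
  have Hin : hp (st k) k j0 \in Bp NB choose rr (st k) k j1.
    by apply/mapP; exists j0; rewrite ?mem_enum.
  have [Hy Hb] := Hpick k.*2 j1 (mem_ne Hin).
  have /mapP [x _ Ex] := Hy.
  have := Hb _ Hin; rewrite /Defs.hpp Ex.
  by case: (eqVneq x j0) => [->//|/Hlt ->].
have Hin1 : hp (st k) k j0 \in Rpp NR NB choose pick rr (st k) k i.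
  by rewrite -Hpp1; apply: spread1 Ha Hj1.
have Hst : st k.+1 i = hp (st k) k j0.
  have [x Hx Ex] := next_form Ha.
  have Hxa := NR_alive Ha Hx.
  have [z Hz Ez] := hpp_form Hxa.
  have [_ Hb] := Hpick k.*2.+1 i (mem_ne Hin1).
  have := Hb _ Hin1.
  change (pick k.*2.+1 i (Rpp NR NB choose pick rr (st k) k i)) with (st k.+1 i).
  rewrite Ex Ez.
  by case: (eqVneq z j0) => [->//|/Hlt ->].
split=> //; split.
  by rewrite Hst -Hpp1; apply/mapP; exists j1; rewrite ?mem_enum.
rewrite Hst; split; first exact: spread0 Hj1a Hj0.
move=> h' /mapP [x _ ->] Hne.
have Hx : x != j0 by apply: contraNneq Hne => ->.
by have := Hlt _ Hx; case: ltgtP.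
Qed.

End Det.
Section Ev.
Variables (d : measure_display) (T : measurableType d) (R : realType).
Variable (P : probability T R).

Definition Iset (L : seq nat) (G : nat -> set T) : set T :=
  [set w | forall k, k \in L -> G k w].

Lemma Iset_cons a L G : Iset (a :: L) G = G a `&` Iset L G.
Proof.
apply/seteqP; split => w /=.
  by move=> H; split; [apply: H; rewrite mem_head | move=> k Hk; apply: H; rewrite inE Hk orbT].
by move=> [Ha H] k; rewrite inE => /orP [/eqP ->|/H].
Qed.

Lemma Iset_nil G : Iset [::] G = setT.
Proof. by apply/seteqP; split => w. Qed.

Lemma Iset_meas L G : (forall k, measurable (G k)) -> measurable (Iset L G).
Proof.
move=> HG; elim: L => [|a L IH]; first by rewrite Iset_nil.
by rewrite Iset_cons; apply: measurableI.
Qed.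

Lemma indep_compl (G : nat -> set T) (c : R) :
  (forall k, measurable (G k)) ->
  (forall L, uniq L -> P (Iset L G) = (c ^+ size L)%:E) ->
  forall Nb L, uniq (Nb ++ L) ->
  P (Iset Nb (fun k => ~` G k) `&` Iset L G) = (((1 - c) ^+ size Nb) * c ^+ size L)%:E.
Proof.
move=> HG HL; elim=> [|a Nb IH] L /=.
  by move=> HU; rewrite Iset_nil setTI HL // expr0 mul1r.
move=> /andP [Ha HU].
have HU2 : uniq (Nb ++ a :: L).
  have Hp : perm_eq (Nb ++ [:: a] ++ L) ([:: a] ++ Nb ++ L) by rewrite (perm_catCA Nb [:: a] L).
  by rewrite (perm_uniq Hp) /= Ha HU.
have E1 := IH _ HU.
have E2 := IH _ HU2.
have HGc : forall k, measurable (~` G k) by move=> k; apply: measurableC.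
set X := Iset Nb (fun k => ~` G k) `&` Iset L G.
have mX : measurable X by apply: measurableI; apply: Iset_meas.
have -> : Iset (a :: Nb) (fun k => ~` G k) `&` Iset L G = X `\` G a.
  rewrite Iset_cons /X; apply/seteqP; split => w /=; by firstorder.
rewrite measureD //; last first.
  by apply: le_lt_trans (probability_le1 _ mX) _; exact: ltey.
have -> : X `&` G a = Iset Nb (fun k => ~` G k) `&` Iset (a :: L) G.
  rewrite Iset_cons /X; apply/seteqP; split => w /=; by firstorder.
have -> : (P X - P (Iset Nb (fun k => ~` G k) `&` Iset (a :: L) G))%E =
  (((1 - c) ^+ size Nb * c ^+ size L)%:E - ((1 - c) ^+ size Nb * c ^+ size (a :: L))%:E)%E.
  by congr (_ - _)%E; [exact: E1 | exact: E2].
rewrite -EFinB; congr (_%:E).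
rewrite /= exprS exprS; ring.
Qed.

End Ev.

Lemma pow_small (R : realType) (x q : R) : 0 <= q -> q < 1 ->
  (forall N, x <= q ^+ N) -> x <= 0.
Proof.
move=> q0 q1 H; rewrite leNgt; apply/negP => x0.
have hq : `|q| < 1 by rewrite ger0_norm.
have [N _ HN] := cvgr_lt _ (cvg_expr hq) _ x0.
have := HN N (leqnn N) => /=.
by rewrite ltNge H.
Qed.

Lemma prod_const_E (R : realType) (c : R) (L : seq nat) :
  (\big[*%E/1%E]_(k <- L) c%:E)%E = (c ^+ size L)%:E.
Proof.
elim: L => [|a L IH]; first by rewrite big_nil.
by rewrite big_cons IH /= exprS EFinM.
Qed.

Section Live.
Variables (d : measure_display) (T : measurableType d) (R : realType).
Variable (P : probability T R).
Variables (M : eqType) (n t_r t_b : nat).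
Variable alive : 'I_n -> nat -> bool.
Variables NR NB : nat -> 'I_n -> {set 'I_n}.
Variable choose : 'I_n -> nat -> history R M n -> M.
Variable pick : nat -> 'I_n -> seq (history R M n) -> history R M n.
Variable r : 'I_n -> nat -> T -> R.
Hypothesis Htr : (0 < t_r)%N.
Hypothesis Htb : (0 < t_b)%N.
Hypothesis Hpick : forall s i (H : seq (history R M n)), H != [::] -> is_best (pick s i H) H.
Hypothesis Hmeas : forall i k, measurable_fun setT (r i k).
Hypothesis Hind : mutually_independent P (fun ik : 'I_n * nat => r ik.1 ik.2).
Hypothesis Hid : identically_distributed P (fun ik : 'I_n * nat => r ik.1 ik.2).
Hypothesis Htsb : forall w : T, tsb_full alive NR NB choose pick (fun i k => r i k w) t_r t_b.
Variables (hi lo : R).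
Hypothesis Hlh : lo < hi.
Hypothesis Hph : forall i k, (0 < P (r i k @^-1` [set hi]))%E.
Hypothesis Hpl : forall i k, (0 < P (r i k @^-1` [set lo]))%E.
Variable i : 'I_n.
Hypothesis Hi : forall s, alive i s.

Definition j1 k := odflt i [pick j in NB k.*2.+1 i].
Definition j0 k := odflt i [pick j in NB k.*2 (j1 k)].
Definition Bv x k := if x == j0 k then hi else lo.
Definition E k := [set w | forall x, r x k w = Bv x k].

Lemma pre_meas x k (B : set R) : measurable B -> measurable (r x k @^-1` B).
Proof. by move=> mB; have := Hmeas x k measurableT mB; rewrite setTI. Qed.

Lemma P_fin (A : set T) : measurable A -> P A \is a fin_num.
Proof.
move=> mA; rewrite ge0_fin_numE ?measure_ge0 //.
by apply: le_lt_trans (probability_le1 _ mA) _; exact: ltey.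
Qed.

Lemma E_meas k : measurable (E k).
Proof.
have H : forall l : seq 'I_n, measurable [set w | forall x, x \in l -> r x k w = Bv x k].
  elim=> [|a l IH].
    by rewrite (_ : [set w | _] = setT) //; apply/seteqP; split.
  rewrite (_ : [set w | _] = (r a k @^-1` [set Bv a k]) `&` [set w | forall x, x \in l -> r x k w = Bv x k]).
    by apply: measurableI => //; apply: pre_meas; exact: measurable_set1.
  apply/seteqP; split => w /=.
    by move=> Hw; split; [apply: Hw; rewrite mem_head | move=> x Hx; apply: Hw; rewrite inE Hx orbT].
  by move=> [Ha Hw] x; rewrite inE => /orP [/eqP ->|/Hw].
rewrite (_ : E k = [set w | forall x, x \in enum 'I_n -> r x k w = Bv x k]) //.
apply/seteqP; split => w /= Hw x //; by apply: Hw; rewrite mem_enum.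
Qed.

Definition ph := fine (P (r i 0 @^-1` [set hi])).
Definition pl := fine (P (r i 0 @^-1` [set lo])).
Definition c := ph * pl ^+ n.-1.

Lemma prod_if j : \prod_(x <- enum 'I_n) (if x == j then ph else pl) = c.
Proof.
rewrite big_enum /= (bigD1 j) //= eqxx /c; congr (_ * _).
rewrite (eq_bigr (fun _ => pl)); last by move=> x; rewrite ?andTb => /negbTE ->.
rewrite prodr_const; congr (_ ^+ _).
transitivity #|predC1 j|; first by apply: eq_card => x; rewrite !inE.
by rewrite cardC1 card_ord.
Qed.

Lemma PE L : uniq L -> P (Iset L E) = (c ^+ size L)%:E.
Proof.
move=> HL.
set F := [seq (x, k) | k <- L, x <- enum 'I_n].
pose B := fun ik : 'I_n * nat => [set Bv ik.1 ik.2].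
have HF : uniq F.
  apply: allpairs_uniq => //; first exact: enum_uniq.
  by move=> [k1 x1] [k2 x2] _ _ /= [-> ->].
have Hset : Iset L E = \bigcap_(ik in [set` F]) ((fun ik : 'I_n * nat => r ik.1 ik.2) ik @^-1` B ik).
  apply/seteqP; split => w /=.
    move=> H [x k] /= HxF.
    have /allpairsP [[k' x'] [Hk' _ /= [-> ->]]] := HxF.
    exact: H k' Hk' x'.
  move=> H k Hk x; apply: (H (x, k)) => /=.
  by apply/allpairsP; exists (k, x); rewrite mem_enum.
rewrite Hset Hind //; last by move=> ik; apply: measurable_set1.
rewrite big_allpairs_dep /=.
have Hin k : (\big[*%E/1%E]_(x <- enum 'I_n) P (r x k @^-1` [set Bv x k]))%E = c%:E.
  rewrite -(prod_if (j0 k)) -prodEFin; apply: eq_bigr => x _.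
  have -> : P (r x k @^-1` [set Bv x k]) = P (r i 0 @^-1` [set Bv x k]).
    exact: (Hid (x, k) (i, 0) (measurable_set1 _)).
  rewrite /Bv; case: eqP => _; rewrite fineK //; apply: P_fin; apply: pre_meas; exact: measurable_set1.
rewrite (eq_bigr (fun _ => c%:E)); last by move=> k _; exact: Hin.
exact: prod_const_E.
Qed.

Lemma c_pos : 0 < c.
Proof.
have Hp A : measurable A -> (0 < P A)%E -> 0 < fine (P A).
  by move=> mA HA; apply: fine_gt0; rewrite HA /=; apply: le_lt_trans (probability_le1 _ mA) _; exact: ltey.
apply: mulr_gt0; first by apply: Hp; [apply: pre_meas; exact: measurable_set1 | exact: Hph].
by apply: exprn_gt0; apply: Hp; [apply: pre_meas; exact: measurable_set1 | exact: Hpl].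
Qed.

Lemma one_c : 0 <= 1 - c.
Proof.
have := indep_compl E_meas PE (Nb := [:: 0%N]) (L := [::]) erefl.
rewrite /= expr1 expr0 mulr1 => H.
have H0 : (0 <= (1 - c)%:E)%E by rewrite -H; exact: measure_ge0.
by rewrite lee_fin in H0.
Qed.

Definition Bad s := \bigcap_k ~` E (k + s).

Lemma Bad_meas s : measurable (Bad s).
Proof. by apply: bigcapT_measurable => k; apply: measurableC; exact: E_meas. Qed.

Lemma PBad s : P (Bad s) = 0%E.
Proof.
have HN N : (P (Bad s) <= ((1 - c) ^+ N)%:E)%E.
  have := indep_compl E_meas PE (Nb := iota s N) (L := [::]).
  rewrite cats0 iota_uniq size_iota /= expr0 mulr1 => <- //.
  apply: le_measure; rewrite ?inE.
  - exact: Bad_meas.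
  - by apply: measurableI; apply: Iset_meas => // k; [apply: measurableC|]; exact: E_meas.
  move=> w Hw; split => // k; rewrite mem_iota => /andP [Hk _].
  by have := Hw (k - s)%N I; rewrite subnK.
have Hf := P_fin (Bad_meas s).
apply/eqP; rewrite eq_le measure_ge0 andbT -(fineK Hf) lee_fin.
apply: (pow_small (q := 1 - c)); first exact: one_c.
  by rewrite ltrBlDr ltrDl c_pos.
by move=> N; rewrite -lee_fin fineK.
Qed.

Lemma j1_in (w : T) k : j1 k \in NB k.*2.+1 i.
Proof.
rewrite /j1; case: pickP => [j -> //|H].
have [j Hj] := NB_ne Htb (Htsb w) (Hi k.*2.+2).
by have := H j; rewrite Hj.
Qed.

Lemma j0_in (w : T) k : j0 k \in NB k.*2 (j1 k).
Proof.
have Ha := NB_alive (Htsb w) (Hi k.*2.+2) (j1_in w k).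
rewrite /j0; case: pickP => [j -> //|H].
have [j Hj] := NB_ne Htb (Htsb w) Ha.
by have := H j; rewrite Hj.
Qed.

Lemma live_ae s :
  {ae P, forall w : T, forall h : history R M n,
     longest_delivered alive NR NB choose pick (fun i k => r i k w) s i h ->
     exists k : nat, [/\ (s < k.*2.+2)%N,
       delivers alive NR NB choose pick (fun i k => r i k w) k i &
       (size h < size (state NR NB choose pick (fun i k => r i k w) k.+1 i))%N]}.
Proof.
exists (Bad s); split; [exact: Bad_meas | exact: PBad |].
move=> w /= Hn k _ HE; apply: Hn => h Hld.
exists (k + s)%N; split.
- lia.
- apply: (success Htr Htb Hpick (Htsb w) Hlh (Hi _) (j1_in w (k + s)) (j0_in w (k + s))).
  + by rewrite (HE (j0 (k + s))) /Bv eqxx.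
  + by move=> x Hx; rewrite (HE x) /Bv (negbTE Hx).
- rewrite (size_state Htr Htb Hpick (Htsb w) (Hi (k + s).+1.*2)).
  case: Hld => [[[k'' [Hk'' [_ ->]]] _] | [-> _]] //.
  rewrite (size_state Htr Htb Hpick (Htsb w) (Hi k''.+1.*2)); lia.
Qed.

End Live.

Unset Implicit Arguments.
Set Strict Implicit.

Theorem theorem1
  (d : measure_display) (T : measurableType d) (R : realType)
  (P : probability T R)
  (M : eqType) (n t_r t_b : nat)
  (alive : 'I_n -> nat -> bool)
  (NR NB : nat -> 'I_n -> {set 'I_n})
  (choose : 'I_n -> nat -> history R M n -> M)
  (pick : nat -> 'I_n -> seq (history R M n) -> history R M n)
  (r : 'I_n -> nat -> T -> R) :
  (0 < t_r)%N -> (0 < t_b)%N ->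
  (* crashes are permanent *)
  (forall i s, alive i s.+1 -> alive i s) ->
  (* "any best history" *)
  (forall s i (H : seq (history R M n)), H != [::] -> is_best (pick s i H) H) ->
  (* RandomValue: node-private i.i.d. draws from a fixed distribution with
     at least two values of nonzero probability *)
  (forall i k, measurable_fun setT (r i k)) ->
  mutually_independent P (fun ik : 'I_n * nat => r ik.1 ik.2) ->
  identically_distributed P (fun ik : 'I_n * nat => r ik.1 ik.2) ->
  (exists a b : R, a != b /\
     forall i k, (0 < P (r i k @^-1` [set a]))%E /\ (0 < P (r i k @^-1` [set b]))%E) ->
  (* the network (schedule independent of the priorities) provides
     full-spread TSB(t_r, t_b, n) in every run *)
  (forall w : T, tsb_full alive NR NB choose pick (fun i k => r i k w) t_r t_b) ->
  (* Liveness *)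
  (forall (i : 'I_n), (forall s, alive i s) -> forall s : nat,
     {ae P, forall w : T, forall h : history R M n,
        longest_delivered alive NR NB choose pick (fun i k => r i k w) s i h ->
        exists k : nat, [/\ (s < k.*2.+2)%N,
          delivers alive NR NB choose pick (fun i k => r i k w) k i &
          (size h < size (state NR NB choose pick (fun i k => r i k w) k.+1 i))%N]})
  /\
  (* Validity *)
  (exists delta : nat, forall w : T,
     validity_run alive NR NB choose pick (fun i k => r i k w) delta)
  /\
  (* Consistency *)
  (forall w : T, consistency_run alive NR NB choose pick (fun i k => r i k w)).
Proof.
move=> Htr Htb Hmono Hpick Hmeas Hind Hid. move=> [a [b [Hab Hpos]]] Htsb.
have [hi [lo [Hlh Hph Hpl]]] : exists hi lo : R, [/\ lo < hi,
    forall i k, (0 < P (r i k @^-1` [set hi]))%E &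
    forall i k, (0 < P (r i k @^-1` [set lo]))%E].
  case: (ltgtP a b) => Hc.
  - by exists b, a; split => // i k; case: (Hpos i k).
  - by exists a, b; split => // i k; case: (Hpos i k).
  - by rewrite Hc eqxx in Hab.
split; [|split].
- move=> i Hi s.
  exact: (live_ae Htr Htb Hpick Hmeas Hind Hid Htsb Hlh Hph Hpl Hi s).
- by exists 2%N => w; exact: (validity_det Htr Htb Hpick (Htsb w)).
- by move=> w; exact: (consistency_det Htr Htb Hpick (Htsb w)).
Qed.
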